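(* Let $G$ be a graph with at least one edge such that the subgraph of $G$ induced by all vertices of degree at least $3$ is a forest. Then $\chi_s'(G) \le 4\Delta(G) - 3$.
   Context: All graphs are finite and simple; $\Delta(G)$ is the maximum degree. A strong edge coloring of $G$ is an assignment of colors to the edges of $G$ such that every path with three edges receives three distinct colors; equivalently, any two distinct edges that share an endpoint, or whose endpoints are joined by an edge, receive different colors. The strong chromatic index $\chi_s'(G)$ is the minimum number of colors in a strong edge coloring of $G$. *)

(* Defs.v *)
From mathcomp Require Import all_boot.
Set Implicit Arguments. Unset Strict Implicit. Unset Printing Implicit Defensive.

Section Graphs.
Variable T : finType.
Variable e : rel T.

Definition simple_graph : Prop := symmetric e /\ irreflexive e.

Definition deg (x : T) : nat := #|[set y | e x y]|.
Definition maxdeg : nat := \max_(x : T) deg x.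

Definition is_edge (E : {set T}) : bool :=
  [exists u, exists v, e u v && (E == [set u; v])].

Definition edges_conflict (E F : {set T}) : bool :=
  (E :&: F != set0) || [exists x in E, exists y in F, e x y].

Definition strong_edge_coloring (k : nat) (c : {set T} -> nat) : Prop :=
  (forall E, is_edge E -> c E < k) /\
  (forall E F, is_edge E -> is_edge F -> E != F -> edges_conflict E F ->
     c E != c F).

Definition strong_chromatic_index_le (k : nat) : Prop :=
  exists c : {set T} -> nat, strong_edge_coloring k c.

Definition induces_forest (S : {set T}) : Prop :=
  ~ exists p : seq T, [/\ uniq p, 3 <= size p, all (fun x => x \in S) p & cycle e p].

Definition high_deg_set : {set T} := [set x | 3 <= deg x].
End Graphs.

(* Main.v *)
Require Import Defs.
From mathcomp Require Import all_boot zify.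
Set Implicit Arguments. Unset Strict Implicit. Unset Printing Implicit Defensive.

Lemma card_bigcup_leq (I T : finType) (A : {pred I}) (F : I -> {set T}) :
  #|\bigcup_(i in A) F i| <= \sum_(i in A) #|F i|.
Proof.
apply: (big_ind2 (fun (X : {set T}) n => #|X| <= n)) => //.
- by rewrite cards0.
- move=> X1 n1 X2 n2 h1 h2; apply: leq_trans (leq_card_setU _ _) _; exact: leq_add.
Qed.

Lemma greedy (X : finType) (P : pred X) (cf : rel X) (k : nat) :
  symmetric cf ->
  (forall F : {set X}, F != set0 -> {subset F <= P} ->
     exists2 f, f \in F & #|[set g in F | (g != f) && cf f g]| < k) ->
  forall F : {set X}, {subset F <= P} -> exists c : X -> nat,
    (forall x, x \in F -> c x < k) /\
    (forall x y, x \in F -> y \in F -> x != y -> cf x y -> c x != c y).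
Proof.
move=> cfs H.
suff S: forall n (F : {set X}), #|F| <= n -> {subset F <= P} -> exists c : X -> nat,
    (forall x, x \in F -> c x < k) /\
    (forall x y, x \in F -> y \in F -> x != y -> cf x y -> c x != c y).
  by move=> F; apply: (S #|F|).
elim=> [|n IH] F.
  rewrite leqn0 cards_eq0 => /eqP -> _.
  by exists (fun _ => 0); split=> x; rewrite inE.
move=> hF hP; case: (eqVneq F set0) => [->|F0].
  by exists (fun _ => 0); split=> x; rewrite inE.
have [f fF hf] := H F F0 hP.
have [c [c1 c2]] : exists c : X -> nat,
    (forall x, x \in F :\ f -> c x < k) /\
    (forall x y, x \in F :\ f -> y \in F :\ f -> x != y -> cf x y -> c x != c y).
  apply: IH.
    by move: hF; rewrite (cardsD1 f F) fF add1n ltnS.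
  by move=> x; rewrite inE => /andP[_ /hP].
set G := [set g in F | (g != f) && cf f g] in hf.
set s := [seq c g | g <- enum G].
have [i ik iS] : exists2 i, i < k & i \notin s.
  case: (boolP (all (fun i => i \in s) (iota 0 k))) => [/allP al|].
    have := uniq_leq_size (iota_uniq 0 k) al.
    by rewrite size_iota size_map -cardE leqNgt hf.
  by case/allPn => i; rewrite mem_iota add0n => /andP[_ ik] iS; exists i.
have cG : forall g, g \in G -> c g != i.
  move=> g gG; apply/eqP => ci; move: iS; rewrite -ci.
  by rewrite (map_f c) // mem_enum.
exists (fun x => if x == f then i else c x); split.
  move=> x xF; case: eqP => [//|/eqP xf]; apply: c1; by rewrite !inE xf.
move=> x y xF yF xy cxy.
case: (eqVneq x f) => [xf|xf]; case: (eqVneq y f) => [yf|yf].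
- by rewrite xf yf eqxx in xy.
- rewrite eq_sym; apply: cG; rewrite !inE yF yf -xf cxy.
  done.
- apply: cG; rewrite !inE xF xf -yf cfs cxy. done.
- apply: c2 => //; by rewrite !inE ?xf ?yf ?xF ?yF.
Qed.

Definition Nb (T : finType) (e : rel T) (u : T) : {set T} := [set y | e u y].
Definition Bset (T : finType) (F : {set {set T}}) (w z : T) : {set {set T}} :=
  [set g in F | (w \in g) && (g != [set w; z])].
Definition confs (T : finType) (e : rel T) (F : {set {set T}}) (E : {set T}) :=
  [set g in F | (g != E) && edges_conflict e E g].

Lemma edgeP (T : finType) (e : rel T) E : is_edge e E -> exists u v, e u v /\ E = [set u; v].
Proof. by case/existsP => u /existsP[v /andP[h /eqP ->]]; exists u, v. Qed.

Lemma conflict_sym (T : finType) (e : rel T) : symmetric e -> symmetric (edges_conflict e).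
Proof.
move=> es E F; rewrite /edges_conflict setIC; congr (_ || _).
apply/existsP/existsP => -[x /andP[xE /existsP[y /andP[yF exy]]]];
  exists y; rewrite yF /=; apply/existsP; exists x; by rewrite xE es.
Qed.

Lemma confs_sub (T : finType) (e : rel T) (F : {set {set T}}) u v :
  simple_graph e -> (forall g, g \in F -> is_edge e g) -> e u v ->
  confs e F [set u; v] \subset
  (\bigcup_(w in Nb e u) Bset F w u) :|: (\bigcup_(w in Nb e v) Bset F w v).
Proof.
move=> [es ei] Fe euv; apply/subsetP => g; rewrite inE => /andP[gF /andP[gne cfl]].
case: (boolP (u \in g)) => ug.
  rewrite in_setU; apply/orP; right; apply/bigcupP; exists u; first by rewrite inE es.
  by rewrite inE gF ug gne.
case: (boolP (v \in g)) => vg.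
  rewrite in_setU; apply/orP; left; apply/bigcupP; exists v; first by rewrite inE.
  by rewrite inE gF vg setUC gne.
move: cfl; rewrite /edges_conflict; case/orP.
  case/set0Pn => a; rewrite !inE => /andP[/orP[]/eqP-> ag]; by rewrite ag in ug vg.
case/existsP => a /andP[]; rewrite !inE => /orP[]/eqP-> /existsP[b /andP[bg eab]].
  apply/orP; left; apply/bigcupP; exists b; first by rewrite inE.
  rewrite inE gF bg /=; apply/eqP => gq; by rewrite gq !inE eqxx orbT in ug.
apply/orP; right; apply/bigcupP; exists b; first by rewrite inE.
rewrite inE gF bg /=; apply/eqP => gq; by rewrite gq !inE eqxx orbT in vg.
Qed.

Lemma confs_le (T : finType) (e : rel T) (F : {set {set T}}) u v :
  simple_graph e -> (forall g, g \in F -> is_edge e g) -> e u v ->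
  #|confs e F [set u; v]| <=
  \sum_(w in Nb e u) #|Bset F w u| + \sum_(w in Nb e v) #|Bset F w v|.
Proof.
move=> sg Fe euv; apply: leq_trans (subset_leq_card (confs_sub sg Fe euv)) _.
apply: leq_trans (leq_card_setU _ _) _.
apply: leq_add; apply: (big_ind2 (fun (X : {set {set T}}) n => #|X| <= n)) => //.
- by rewrite cards0.
- move=> X1 n1 X2 n2 h1 h2; apply: leq_trans (leq_card_setU _ _) _; exact: leq_add.
- by rewrite cards0.
- move=> X1 n1 X2 n2 h1 h2; apply: leq_trans (leq_card_setU _ _) _; exact: leq_add.
Qed.

Lemma Bset_le (T : finType) (e : rel T) (F : {set {set T}}) w z :
  simple_graph e -> (forall g, g \in F -> is_edge e g) -> e w z ->
  #|Bset F w z| <= deg e w - 1.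
Proof.
move=> [es ei] Fe ewz.
have -> : deg e w - 1 = #|[set y | e w y] :\ z|.
  by rewrite /deg (cardsD1 z [set y | e w y]) inE ewz add1n subn1.
apply: leq_trans (leq_imset_card (fun y => [set w; y]) _).
apply: subset_leq_card; apply/subsetP => g; rewrite inE => /andP[gF /andP[wg gne]].
have [a [b [eab gab]]] := edgeP (Fe g gF).
move: wg; rewrite gab !inE => /orP[]/eqP wab.
  apply/imsetP; exists b; last by rewrite wab.
  rewrite !inE wab eab andbT; apply/eqP => bz; move/eqP: gne; apply.
  by rewrite gab wab bz.
apply/imsetP; exists a; last by rewrite wab setUC.
rewrite !inE wab es eab andbT; apply/eqP => az; move/eqP: gne; apply.
by rewrite gab wab az setUC.
Qed.

Lemma Bset0 (T : finType) (F : {set {set T}}) w z :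
  (forall g, g \in F -> w \in g -> g = [set w; z]) -> #|Bset F w z| = 0.
Proof.
move=> h; apply/eqP; rewrite cards_eq0; apply/eqP/setP => g; rewrite !inE.
case: (boolP (g \in F)) => //= gF; case: (boolP (w \in g)) => //= wg.
by rewrite (h g gF wg) eqxx.
Qed.

Lemma sum_unif (T : finType) (A : {set T}) (f : T -> nat) c :
  (forall w, w \in A -> f w <= c) -> \sum_(w in A) f w <= #|A| * c.
Proof. by move=> h; rewrite -sum_nat_const; apply: leq_sum. Qed.

Lemma sum_special (T : finType) (A : {set T}) (f : T -> nat) s D :
  (forall w, w \in A -> w != s -> f w <= 1) -> (s \in A -> f s <= D.+1) ->
  \sum_(w in A) f w <= #|A| + D.
Proof.
move=> h1 h2; case: (boolP (s \in A)) => sA.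
  rewrite (big_setD1 s sA) (cardsD1 s A) sA /=.
  have : \sum_(i in A :\ s) f i <= \sum_(i in A :\ s) 1.
    by apply: leq_sum => i; rewrite !inE => /andP[ins iA]; apply: h1.
  rewrite sum1_card; have := h2 sA; lia.
have : \sum_(i in A) f i <= \sum_(i in A) 1.
  apply: leq_sum => i iA; apply: h1 => //; apply: contra sA => /eqP <-; done.
rewrite sum1_card; lia.
Qed.

Lemma cyc (T : finType) (e : rel T) (S : {set T}) x s y :
  induces_forest e S -> symmetric e -> path e x s -> uniq (x :: s) ->
  all (fun z => z \in S) (x :: s) -> y \in behead s -> ~~ e y x.
Proof.
move=> hf es; case: s => [//|a s] pth un al /= ys; apply/negP => eyx; apply: hf.
case/splitPr: ys pth un al => s1 s2 pth un al.
exists (x :: a :: rcons s1 y).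
have sub : subseq (x :: a :: rcons s1 y) (x :: a :: (s1 ++ y :: s2)).
  rewrite /= !eqxx -cats1; apply: cat_subseq; first exact: subseq_refl.
  by rewrite /= eqxx sub0seq.
split.
- exact: subseq_uniq sub un.
- by rewrite /= size_rcons.
- apply/allP => z zin; move/allP: al; apply; exact: (mem_subseq sub).
- rewrite /= rcons_path last_rcons eyx andbT.
  move: pth; rewrite /= cat_path => /and3P[-> p1 p2] /=.
  by rewrite rcons_path p1 /=; case/andP: p2.
Qed.
Lemma forest_pick (T : finType) (e : rel T) (S W : {set T}) :
  simple_graph e -> induces_forest e S -> W \subset S -> W != set0 ->
  exists v, v \in W /\ (exists s0, forall y, e v y -> y \in W -> y = s0) /\
   (forall y, e v y -> y \in W -> exists s, forall x, e y x -> x \in W -> x != s ->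
       forall z, e x z -> z \in W -> z = y).
Proof.
move=> [es ei] hf WS W0.
pose good (s : seq T) := [&& uniq s, all (fun z => z \in W) s &
   (if s is x :: s' then path e x s' else false)].
pose Pn n := [exists t : n.-tuple T, good t].
have exP : exists n, Pn n.
  case/set0Pn: W0 => w wW; exists 1; apply/existsP; exists [tuple w].
  by rewrite /good /= wW.
have ubP : forall i, Pn i -> i <= #|T|.
  move=> i /existsP[t /and3P[un _ _]]; rewrite -(size_tuple t).
  by rewrite -(card_uniqP un) max_card.
case: (ex_maxnP exP ubP) => n /existsP[t gt] maxn.
have maxP : forall s, good s -> size s <= n.
  move=> s gs; apply: maxn; apply/existsP; exists (in_tuple s); done.
have szt : size (val t) = n by rewrite size_tuple.
have gt2 : good (val t) := gt. move: gt2 szt; case: (val t) => [|v p] // /and3P[un /andP[vW alW] pth] szp.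
rewrite /= in szp. have {}alW : all (fun z => z \in W) p := alW.
have alS : forall z, z \in W -> z \in S by move=> z; apply: (subsetP WS).
have allS : forall s, all (fun z => z \in W) s -> all (fun z => z \in S) s.
  by move=> s /allP h; apply/allP => z /h /alS.
have claimA : forall y, e v y -> y \in W -> y \in p /\ y \notin behead p.
  move=> y evy yW.
  have yp : y \in v :: p.
    apply/negPn/negP => yn; have := maxP (y :: v :: p).
    rewrite /good cons_uniq yn un -szp /= ltnn yW vW alW es evy pth.
    by move=> /(_ isT).
  move: yp; rewrite in_cons => /orP[/eqP yv|yp]; first by rewrite yv ei in evy.
  split=> //; apply/negP => yb.
  have h : all (fun z => z \in S) (v :: p) by apply: allS; rewrite /= vW alW.
  by have := cyc hf es pth un h yb; rewrite es evy.
exists v; split=> //; split.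
  exists (head v p) => y evy yW; have [yp yb] := claimA y evy yW.
  by case: p {claimA un alW pth szp} yp yb => //= a q; rewrite in_cons => /orP[/eqP|] // ->.
move=> y evy yW; have [yp yb] := claimA y evy yW.
case: p claimA un alW pth szp yp yb => //= a q claimA un alW pth szp.
rewrite in_cons => /orP[/eqP ya|yq] yn; last by rewrite yq in yn.
subst y; exists (head v q) => x eax xW xs.
case: (eqVneq x v) => [->|xv].
  by move=> z evz zW; have [] := claimA z evz zW; rewrite in_cons => /orP[/eqP|] // zq /negP.
have xa : x != a by apply: contraTneq eax => ->; rewrite ei.
case/andP: pth => eva pthq.
case/andP: un; rewrite in_cons negb_or => /andP[va vq] /andP[aq uq].
case/andP: alW => aW qW.
have xq : x \notin q.
  apply/negP => xq.
  have xb : x \in behead q.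
    have hb : forall (r : seq T) x', x' \in r -> x' != head v r -> x' \in behead r.
      by move=> [|b r] x' //=; rewrite in_cons => /orP[/eqP ->|]; rewrite ?eqxx.
    exact: hb.
  have h1 : uniq (a :: q) by rewrite /= aq uq.
  have h2 : all (fun z => z \in S) (a :: q) by apply: allS; rewrite /= aW qW.
  by have := cyc hf es pthq h1 h2 xb; rewrite (es x a) eax.
move=> z exz zW; case: (eqVneq z a) => // za.
have zx : z != x by apply: contraTneq exz => ->; rewrite ei.
case: (eqVneq z v) => [zv|zvn].
  subst z.
  have h0 : path e x [:: v; a] by rewrite /= exz eva.
  have h1 : uniq [:: x; v; a] by rewrite /= !inE !negb_or xv xa va.
  have h2 : all (fun z => z \in S) [:: x; v; a] by apply: allS; rewrite /= xW vW aW.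
  have h3 : a \in behead [:: v; a] by rewrite /= inE.
  by have := cyc hf es h0 h1 h2 h3; rewrite eax.
case: (boolP (z \in q)) => zq.
  have h0 : path e x (a :: q) by rewrite /= (es x a) eax pthq.
  have h1 : uniq (x :: a :: q) by rewrite /= !inE negb_or xa xq aq uq.
  have h2 : all (fun z => z \in S) (x :: a :: q) by apply: allS; rewrite /= xW aW qW.
  by have := cyc hf es h0 h1 h2 zq; rewrite (es z x) exz.
have := maxP [:: z, x, a & q].
rewrite /good /= !inE !negb_or zx za zq xa xq aq uq zW xW aW qW (es z x) exz (es x a) eax pthq.
by move=> /(_ isT); rewrite -szp /= ltnn.
Qed.

Definition Wset (T : finType) (e : rel T) (F : {set {set T}}) : {set T} :=
  [set w | (3 <= deg e w) && [exists g in F, w \in g]].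

Lemma deg_le (T : finType) (e : rel T) w : deg e w <= maxdeg e.
Proof. exact: (leq_bigmax (F := deg e) w). Qed.

Lemma beta_le (T : finType) (e : rel T) (F : {set {set T}}) w z :
  simple_graph e -> (forall g, g \in F -> is_edge e g) -> e w z ->
  #|Bset F w z| <= maxdeg e - 1.
Proof.
move=> sg Fe ewz; apply: leq_trans (Bset_le sg Fe ewz) _.
by apply: leq_sub2r; apply: deg_le.
Qed.

Lemma notW_le1 (T : finType) (e : rel T) (F : {set {set T}}) w z :
  simple_graph e -> (forall g, g \in F -> is_edge e g) -> e w z ->
  w \notin Wset e F -> #|Bset F w z| <= 1.
Proof.
move=> sg Fe ewz; rewrite inE negb_and -ltnNge => /orP[dw|].
  apply: leq_trans (Bset_le sg Fe ewz) _; lia.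
move=> nex; rewrite Bset0 // => g gF wg; case/negP: nex; apply/existsP; exists g.
by rewrite gF.
Qed.

Lemma sum_unif_edge (T : finType) (e : rel T) (F : {set {set T}}) z :
  simple_graph e -> (forall g, g \in F -> is_edge e g) ->
  \sum_(w in Nb e z) #|Bset F w z| <= deg e z * (maxdeg e - 1).
Proof.
move=> sg Fe; apply: sum_unif => w; rewrite inE => ezw.
apply: beta_le => //; case: sg => es _; by rewrite es.
Qed.

Lemma case1 (T : finType) (e : rel T) (F : {set {set T}}) u v s0 :
  simple_graph e -> (forall g, g \in F -> is_edge e g) -> 3 <= maxdeg e ->
  e u v -> deg e u <= 2 ->
  (forall y, e v y -> y \in Wset e F -> y = s0) ->
  #|confs e F [set u; v]| <= 4 * maxdeg e - 4.
Proof.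
move=> sg Fe D3 euv du hv; have es := sg.1.
apply: leq_trans (confs_le sg Fe euv) _.
have h1 := @sum_unif_edge T e F u sg Fe.
have h2 : \sum_(w in Nb e v) #|Bset F w v| <= #|Nb e v| + (maxdeg e - 2).
  apply: (sum_special (s := s0)).
    move=> w; rewrite inE => evw ws; apply: (notW_le1 (e:=e)) => //; first by rewrite es.
    by apply/negP => /(hv _ evw) wq; rewrite wq eqxx in ws.
  rewrite inE => evs; apply: leq_trans (beta_le sg Fe _) _; [by rewrite es|lia].
have dv := deg_le e v.
have : #|Nb e v| = deg e v by [].
have := leq_mul du (leqnn (maxdeg e - 1)).
move: h1 h2; lia.
Qed.

Lemma select (T : finType) (e : rel T) (F : {set {set T}}) :
  simple_graph e -> induces_forest e (high_deg_set e) -> F != set0 ->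
  (forall g, g \in F -> is_edge e g) -> 0 < maxdeg e ->
  exists2 f, f \in F & #|confs e F f| < 4 * maxdeg e - 3.
Proof.
move=> sg hf F0 Fe D1; have es := sg.1; have ei := sg.2.
suff: exists2 f, f \in F & #|confs e F f| <= 4 * maxdeg e - 4.
  by case=> f fF h; exists f => //; lia.
case: (leqP (maxdeg e) 2) => D2.
  case/set0Pn: F0 => f fF; exists f => //; have [u [v [euv ->]]] := edgeP (Fe f fF).
  apply: leq_trans (confs_le sg Fe euv) _.
  have h1 := @sum_unif_edge T e F u sg Fe; have h2 := @sum_unif_edge T e F v sg Fe.
  have := deg_le e u; have := deg_le e v; move: h1 h2; nia.
case: (boolP [exists f in F, exists u, exists v,
   [&& e u v, f == [set u; v], deg e u <= 2 & deg e v <= 2]]).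
  case/existsP => f /andP[fF /existsP[u /existsP[v /and4P[euv /eqP fe du dv]]]].
  exists f => //; rewrite fe.
  apply: leq_trans (confs_le sg Fe euv) _.
  have h1 := @sum_unif_edge T e F u sg Fe; have h2 := @sum_unif_edge T e F v sg Fe.
  have := leq_mul du (leqnn (maxdeg e - 1)); have := leq_mul dv (leqnn (maxdeg e - 1)).
  move: h1 h2; lia.
move=> noLL.
have W0 : Wset e F != set0.
  case/set0Pn: F0 => f fF; have [u [v [euv fe]]] := edgeP (Fe f fF).
  case: (leqP (deg e u) 2) => du; case: (leqP (deg e v) 2) => dv.
  - case/negP: noLL; apply/existsP; exists f; rewrite fF; apply/existsP; exists u.
    by apply/existsP; exists v; rewrite euv fe eqxx du dv.
  - apply/set0Pn; exists v; rewrite inE dv /=; apply/existsP; exists f.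
    by rewrite fF fe !inE eqxx orbT.
  - apply/set0Pn; exists u; rewrite inE du /=; apply/existsP; exists f.
    by rewrite fF fe !inE eqxx.
  - apply/set0Pn; exists u; rewrite inE du /=; apply/existsP; exists f.
    by rewrite fF fe !inE eqxx.
have WS : Wset e F \subset high_deg_set e.
  by apply/subsetP => w; rewrite !inE => /andP[-> _].
have [v [vW [[s0 hs0] hp2]]] := forest_pick sg hf WS W0.
have D3 : 3 <= maxdeg e by [].
case: (boolP [exists u, [&& deg e u <= 2, e u v & [set u; v] \in F]]).
  case/existsP => u /and3P[du euv uvF].
  by exists [set u; v] => //; apply: (case1 (s0 := s0)).
move=> noA.
have vFedges : forall g, g \in F -> v \in g -> g = [set v; s0] /\ e v s0.
  move=> g gF vg; have [a [b [eab gab]]] := edgeP (Fe g gF).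
  have [w [evw gw]] : exists w, e v w /\ g = [set v; w].
    move: vg; rewrite gab !inE => /orP[]/eqP ->; [exists b | exists a].
      by [].
    by rewrite es eab setUC.
  case: (leqP (deg e w) 2) => dw.
    case/negP: noA; apply/existsP; exists w; rewrite dw (es w v) evw /= setUC -gw gF.
    done.
  have wW : w \in Wset e F.
    by rewrite inE dw /=; apply/existsP; exists g; rewrite gF gw !inE eqxx orbT.
  by rewrite -(hs0 w evw wW); split.
have [evu vuF] : e v s0 /\ [set v; s0] \in F.
  move: vW; rewrite inE => /andP[_ /existsP[g /andP[gF vg]]].
  by have [gq ?] := vFedges g gF vg; split => //; rewrite -gq.
have s0W : s0 \in Wset e F.
  rewrite inE; case: (leqP (deg e s0) 2) => ds /=.
    case/negP: noA; apply/existsP; exists s0; rewrite ds (es s0 v) evu setUC vuF.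
    done.
  by apply/existsP; exists [set v; s0]; rewrite vuF !inE eqxx orbT.
have [s hs] := hp2 s0 evu s0W.
case: (boolP [exists x, exists u', [&& e s0 x, x \in Wset e F, x != s &
   [&& deg e u' <= 2, e u' x & [set u'; x] \in F]]]).
  case/existsP => x /existsP[u' /and4P[esx xW xs /and3P[du' eux uxF]]].
  exists [set u'; x] => //; apply: (case1 (s0 := s0)) => //.
  exact: hs x esx xW xs.
move=> noB.
have xFedges : forall x, e s0 x -> x \in Wset e F -> x != s ->
    forall g, g \in F -> x \in g -> g = [set x; s0].
  move=> x esx xW xs g gF xg; have [a [b [eab gab]]] := edgeP (Fe g gF).
  have [w [exw gw]] : exists w, e x w /\ g = [set x; w].
    move: xg; rewrite gab !inE => /orP[]/eqP ->; [exists b | exists a].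
      by [].
    by rewrite es eab setUC.
  case: (leqP (deg e w) 2) => dw.
    case/negP: noB; apply/existsP; exists x; apply/existsP; exists w.
    by rewrite esx xW xs dw (es w x) exw setUC -gw gF.
  have wW : w \in Wset e F.
    by rewrite inE dw /=; apply/existsP; exists g; rewrite gF gw !inE eqxx orbT.
  by rewrite gw (hs x esx xW xs w exw wW).
exists [set s0; v]; first by rewrite setUC.
have esv : e s0 v by rewrite es.
apply: leq_trans (confs_le sg Fe esv) _.
have h2 : \sum_(w in Nb e v) #|Bset F w v| <= #|Nb e v| + (maxdeg e - 2).
  apply: (sum_special (s := s0)).
    move=> w; rewrite inE => evw ws; apply: (notW_le1 (e:=e)) => //; first by rewrite es.
    by apply/negP => /(hs0 _ evw) wq; rewrite wq eqxx in ws.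
  rewrite inE => evs; apply: leq_trans (beta_le sg Fe _) _; [by rewrite es|lia].
have h1 : \sum_(w in Nb e s0) #|Bset F w s0| <= #|Nb e s0| + (maxdeg e - 2).
  apply: (sum_special (s := s)).
    move=> w; rewrite inE => esw ws; case: (boolP (w \in Wset e F)) => wW.
      by rewrite Bset0 // => g gF wg; apply: xFedges.
    by apply: (notW_le1 (e:=e)) => //; rewrite es.
  rewrite inE => ess; apply: leq_trans (beta_le sg Fe _) _; [by rewrite es|lia].
have := deg_le e v; have := deg_le e s0.
have : #|Nb e v| = deg e v by [].
have : #|Nb e s0| = deg e s0 by [].
move: h1 h2; lia.
Qed.

Theorem theorem4 (T : finType) (e : rel T) :
  simple_graph e ->
  (exists u v, e u v) ->
  induces_forest e (high_deg_set e) ->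
  strong_chromatic_index_le e (4 * maxdeg e - 3).
Proof.
move=> sg [u0 [v0 e0]] hf.
have D1 : 0 < maxdeg e.
  apply: leq_trans (deg_le e u0); rewrite /deg card_gt0; apply/set0Pn; exists v0.
  by rewrite inE.
have hsub : {subset [set E | is_edge e E] <= is_edge e} by move=> E; rewrite inE.
have [c [c1 c2]] := @greedy _ (is_edge e) (edges_conflict e) (4 * maxdeg e - 3)
   (conflict_sym sg.1) (fun F F0 FP => @select T e F sg hf F0 (fun g gF => FP g gF) D1)
   [set E | is_edge e E] hsub.
exists c; split.
  by move=> E hE; apply: c1; rewrite inE.
by move=> E F hE hF; apply: c2; rewrite inE.
Qed.

Print Assumptions theorem4.
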